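(* Fix $x>1$, let $p_1,p_2\ge n$, $p=p_1+p_2$, and let $0<\delta_n\ll1$. Let $$E_n=\left\{(x_1,\dots,x_n)\in\Delta_n:\ \tfrac{p_1}{p}(1-\delta_n)<x_1,\ x_{n-1}<\tfrac{p_1}{p}(1+\delta_n),\ \tfrac{p_1}{p}x<x_n<\tfrac{p_1}{p}(x+\delta_n)\right\},$$ where $\Delta_n=\{(x_1,\dots,x_n)\in[0,1]^n:x_1\le\dots\le x_n\}$. Set $\alpha_2=\frac12-\frac{\delta_n}{x-1}$, $\alpha_1=\frac12+\frac{\delta_n}{x-1}$ and $\bar x_i=\frac{px_i-p_1}{p_1(x-1)}$. Then for all $(x_1,\dots,x_n)\in E_n$, $$\prod_{i=1}^{n-1}(x_n-x_i)\le\left(\frac{p_1(x-1)}{p}\right)^{n-1}\exp\left\{(n+o(n))\frac{px_n-p_1x}{p_1(x-1)}-\sum_{i=1}^{n-1}\bar x_i-\alpha_2\sum_{i=1}^{n-1}\bar x_i^2\right\}$$ and $$\prod_{i=1}^{n-1}(x_n-x_i)\ge\left(\frac{p_1(x-1)}{p}\right)^{n-1}\exp\left\{-\sum_{i=1}^{n-1}\bar x_i-\alpha_1\sum_{i=1}^{n-1}\bar x_i^2\right\}.$$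
   Context: $\delta_n\ll1$ means $\delta_n\to0$ as $n\to\infty$. In the upper bound, $n+o(n)$ denotes a quantity whose ratio to $n$ tends to $1$ as $n\to\infty$ (the bound holds for $n$ large enough). *)

(* Defs.v *)
From HB Require Import structures.
From mathcomp Require Import all_boot all_order all_algebra.
From mathcomp Require Import all_classical all_reals all_analysis.
Set Implicit Arguments. Unset Strict Implicit. Unset Printing Implicit Defensive.
Import Order.TTheory GRing.Theory Num.Theory.
Local Open Scope ring_scope.

(* Points of R^n are encoded as xs : nat -> R, using coordinates xs 1, ..., xs n
   (the values at other indices are irrelevant). *)

Definition in_Delta (R : realType) (n : nat) (xs : nat -> R) : Prop :=
  (forall i : nat, (1 <= i <= n)%N -> 0 <= xs i <= 1) /\
  (forall i : nat, (1 <= i < n)%N -> xs i <= xs i.+1).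

Definition in_E (R : realType) (n p1 p2 : nat) (x d : R) (xs : nat -> R) : Prop :=
  let q := (p1%:R / (p1 + p2)%:R : R) in
  [/\ in_Delta n xs,
      q * (1 - d) < xs 1%N,
      xs (n - 1)%N < q * (1 + d),
      q * x < xs n
    & xs n < q * (x + d)].

Definition xbar (R : realType) (p1 p2 : nat) (x xi : R) : R :=
  ((p1 + p2)%:R * xi - p1%:R) / (p1%:R * (x - 1)).

(* Main.v *)
Require Import Defs.
From HB Require Import structures.
From mathcomp Require Import all_boot all_order all_algebra.
From mathcomp Require Import all_classical all_reals all_analysis.
From mathcomp Require Import ring lra.
Import Order.TTheory GRing.Theory Num.Theory.
Import numFieldNormedType.Exports.
Local Open Scope classical_set_scope.
Local Open Scope ring_scope.
Section S.
Variable R : realType.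

Lemma mvt0 (f df : R -> R) (w : R) :
  (forall x : R, is_derive x (1:R) f (df x)) -> f 0 = 0 -> w != 0 ->
  exists c, 0 < c * w /\ f w = df c * w.
Proof.
move=> hd f0 wn0.
have cont : forall a b : R, {within `[a, b], continuous f}.
  move=> a b; apply: derivable_within_continuous => z _.
  exact: ex_derive.
case: (ltgtP w 0) wn0 => // hw _.
- have [c /[!in_itv]/= /andP[] hc1 hc2 e] := MVT hw (fun x _ => hd x) (cont _ _).
  exists c; split; first by rewrite -mulrNN; apply: mulr_gt0; lra.
  move: e; rewrite f0; lra.
- have [c /[!in_itv]/= /andP[] hc1 hc2 e] := MVT hw (fun x _ => hd x) (cont _ _).
  exists c; split; first by apply: mulr_gt0; lra.
  move: e; rewrite f0; lra.
Qed.

Definition g2 (w : R) := expR w - 1 - w - w ^+ 2 / 2.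
Definition g3 (w : R) := expR w - 1 - w - w ^+ 2 / 2 - w ^+ 3 / 6.

Lemma g2_der (x : R) : is_derive x (1:R) g2 (expR x - 1 - x).
Proof.
rewrite /g2.
have -> : (fun w : R => expR w - 1 - w - w ^+ 2 / 2) = (expR - cst 1 - id - (fun w => 2^-1 *: (w ^+ 2)))%R.
  by apply/funext => w /=; rewrite /GRing.scale /= mulrC.
apply: is_derive_eq.
rewrite /GRing.scale /= !mulr1 subr0; lra.
Qed.
Lemma g3_der (x : R) : is_derive x (1:R) g3 (g2 x).
Proof.
rewrite /g3.
have -> : (fun w : R => expR w - 1 - w - w ^+ 2 / 2 - w ^+ 3 / 6) =
  (expR - cst 1 - id - (fun w => 2^-1 *: (w ^+ 2)) - (fun w => 6^-1 *: (w ^+ 3)))%R.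
  by apply/funext => w /=; rewrite /GRing.scale /= !fctE /= !(mulrC _^-1).
apply: is_derive_eq.
rewrite /GRing.scale /= !mulr1 subr0 /g2 expr2; nra.
Qed.

Lemma g20 : g2 0 = 0.
Proof. by rewrite /g2 expR0 expr0n /= mul0r !subr0 subrr. Qed.

Lemma g2_sign w : 0 <= w * g2 w.
Proof.
have [->|wn0] := eqVneq w 0; first by rewrite mul0r.
have [c [hc ->]] := @mvt0 g2 _ w g2_der g20 wn0.
have := expR_ge1Dx c.
nra.
Qed.
Lemma g30 : g3 0 = 0.
Proof. by rewrite /g3 expR0 !expr0n /= !mul0r !subr0 subrr. Qed.

Lemma g3_ge0 w : 0 <= g3 w.
Proof.
have [->|wn0] := eqVneq w 0; first by rewrite g30.
have [c [hc ->]] := @mvt0 g3 _ w g3_der g30 wn0.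
have := g2_sign c.
have hc2 : 0 < c * c by nra.
nra.
Qed.

Lemma expR_cubic (w : R) : 1 + w + w ^+ 2 / 2 + w ^+ 3 / 6 <= expR w.
Proof. have := g3_ge0 w; rewrite /g3; lra. Qed.

End S.
Lemma polyA (R : realType) (t e : R) : 0 < e -> e <= 10^-1 -> -e < t -> t < e ->
  1 - t <= 1 + (-t - (2^-1 - e) * t^+2) + (-t - (2^-1 - e) * t^+2) ^+ 2 / 2
     + (-t - (2^-1 - e) * t^+2) ^+ 3 / 6.
Proof.
move=> e0 e1 t1 t2.
set a := 2^-1 - e.
have ha : 2/5 <= a <= 2^-1 by rewrite /a; lra.
set u := 1 + a * t.
have hu1 : 9/10 <= u <= 11/10 by rewrite /u; nra.
have hu2 : 0 <= u * u <= 121/100 by nra.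
have hu3 : 0 <= u ^+ 3 <= 7/5 by rewrite !exprS expr0 mulr1; nra.
set k := a - u ^+ 3 / 6.
have hk : 0 <= k <= 1 by rewrite /k; lra.
have htk : - e <= t * k by nra.
have hB : 0 <= e + t * k + a ^+ 2 * t ^+ 2 / 2.
  have : 0 <= a ^+ 2 * t ^+ 2 by rewrite -exprMn sqr_ge0.
  lra.
have -> : 1 + (- t - a * t ^+ 2) + (- t - a * t ^+ 2) ^+ 2 / 2 + (- t - a * t ^+ 2) ^+ 3 / 6
   = (1 - t) + t ^+ 2 * (e + t * k + a ^+ 2 * t ^+ 2 / 2).
  by rewrite /k /u /a; field.
have : 0 <= t ^+ 2 * (e + t * k + a ^+ 2 * t ^+ 2 / 2) by rewrite mulr_ge0 ?sqr_ge0.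
lra.
Qed.

Lemma polyB (R : realType) (t e : R) : 0 < e -> e <= 10^-1 -> -e < t -> t < e ->
  1 <= (1 - t) * (1 + (t + (2^-1 + e) * t^+2) + (t + (2^-1 + e) * t^+2) ^+ 2 / 2
     + (t + (2^-1 + e) * t^+2) ^+ 3 / 6).
Proof.
move=> e0 e1 t1 t2.
set b := 2^-1 + e.
have hb : 2^-1 <= b <= 3/5 by rewrite /b; lra.
set u := 1 + b * t.
have hu1 : 9/10 <= u <= 11/10 by rewrite /u; nra.
have hu2 : 81/100 <= u * u <= 121/100 by nra.
have hut : 81/100 <= u * (1 - t) <= 121/100 by nra.
set m := u ^+ 2 * (u * (1 - t) / 6 - 2^-1).
have hm : -1 <= m <= 0 by rewrite /m expr2; nra.
have htm : - e <= t * m by nra.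
have hB : 0 <= e + t * m + b ^+ 2 * t ^+ 2 / 2.
  have : 0 <= b ^+ 2 * t ^+ 2 by rewrite -exprMn sqr_ge0.
  lra.
have -> : (1 - t) * (1 + (t + b * t ^+ 2) + (t + b * t ^+ 2) ^+ 2 / 2 + (t + b * t ^+ 2) ^+ 3 / 6)
   = 1 + t ^+ 2 * (e + t * m + b ^+ 2 * t ^+ 2 / 2).
  by rewrite /m /u /b; field.
have : 0 <= t ^+ 2 * (e + t * m + b ^+ 2 * t ^+ 2 / 2) by rewrite mulr_ge0 ?sqr_ge0.
lra.
Qed.

Lemma factU (R : realType) (y t e : R) : 0 < e -> e <= 10^-1 -> 0 <= y -> -e < t -> t < e ->
  1 + y - t <= expR (y * (1 + 2 * e) - t - (2^-1 - e) * t ^+ 2).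
Proof.
move=> e0 e1 y0 t1 t2.
have -> : y * (1 + 2 * e) - t - (2^-1 - e) * t ^+ 2 =
  y * (1 + 2 * e) + (- t - (2^-1 - e) * t ^+ 2) by ring.
rewrite expRD.
have h1 := expR_ge1Dx (y * (1 + 2 * e)).
have h2 := le_trans (@polyA R t e e0 e1 t1 t2) (@expR_cubic R (- t - (2^-1 - e) * t ^+ 2)).
have : (1 + y * (1 + 2 * e)) * (1 - t) <= expR (y * (1 + 2 * e)) * expR (- t - (2^-1 - e) * t ^+ 2).
  apply: ler_pM => //; [nra|lra].
have : 0 <= y * (2 * e - t - 2 * e * t) by apply: mulr_ge0 => //; nra.
nra.
Qed.

Lemma factL (R : realType) (y t e : R) : 0 < e -> e <= 10^-1 -> 0 <= y -> -e < t -> t < e ->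
  expR (- t - (2^-1 + e) * t ^+ 2) <= 1 + y - t.
Proof.
move=> e0 e1 y0 t1 t2.
set v := t + (2^-1 + e) * t ^+ 2.
have -> : - t - (2^-1 + e) * t ^+ 2 = - v by rewrite /v; ring.
have hB := @polyB R t e e0 e1 t1 t2.
have hc := @expR_cubic R v.
rewrite -/v in hB.
set Q := 1 + v + v ^+ 2 / 2 + v ^+ 3 / 6 in hB hc.
have Q0 : 0 < Q by nra.
rewrite expRN.
have : (expR v)^-1 <= Q^-1 by rewrite lef_pV2 ?posrE ?expR_gt0.
have : Q^-1 <= 1 - t by rewrite -[Q^-1]mul1r ler_pdivrMr.
lra.
Qed.


Lemma mono_chain (R : realType) n (xs : nat -> R) :
  (forall i, (1 <= i < n)%N -> xs i <= xs i.+1) ->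
  forall i j, (1 <= i)%N -> (i <= j)%N -> (j <= n)%N -> xs i <= xs j.
Proof.
move=> h i j i1; elim: j => [|j IH] ij jn.
- by move: ij i1; rewrite leqn0 => /eqP->.
- move: ij; rewrite leq_eqVlt => /orP[/eqP->//|ij].
  apply: le_trans (IH ij (ltnW jn)) (h j _).
  by rewrite (leq_trans i1 ij) jn.
Qed.

Lemma sum_id (R : realType) n (t : nat -> R) (c a : R) :
  \sum_(1 <= i < n) (c - t i - a * t i ^+ 2) =
  (n - 1)%:R * c - \sum_(1 <= i < n) t i - a * \sum_(1 <= i < n) t i ^+ 2.
Proof.
rewrite !big_split /= sumr_const_nat !sumrN mulr_sumr mulr_natl.
by [].
Qed.

Lemma conv_o (R : realType) (x : R) (delta : nat -> R) : 1 < x ->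
  delta @ \oo --> (0 : R) ->
  (fun n : nat => (2 * n%:R * (delta n / (x - 1))) / n%:R) @ \oo --> (0 : R).
Proof.
move=> hx hcv.
have x10 : x - 1 != 0 by rewrite subr_eq0 gt_eqF.
apply/cvgrPdist_lt => r r0.
have r1 : 0 < r * (x - 1) / 2 by apply: divr_gt0 => //; apply: mulr_gt0 => //; lra.
move/cvgrPdist_lt: hcv => /(_ _ r1) [N _ HN].
exists N.+1 => // n /= hn.
have n0 : (n%:R : R) != 0 by rewrite pnatr_eq0 -lt0n (leq_ltn_trans _ hn).
have -> : 2 * n%:R * (delta n / (x - 1)) / n%:R = 2 / (x - 1) * delta n.
  by field; rewrite n0 andbT x10.
have h : `|delta n| < r * (x - 1) / 2.
  by have := HN n (ltnW hn); rewrite /= sub0r normrN.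
rewrite sub0r normrN normrM.
rewrite (ger0_norm (_ : 0 <= 2 / (x - 1))); last by apply: divr_ge0 => //; lra.
rewrite -(ltr_pM2l (_ : 0 < (x - 1) / 2)); last by apply: divr_gt0 => //; lra.
rewrite mulrA.
have -> : (x - 1) / 2 * (2 / (x - 1)) = 1 by field; apply/eqP; lra.
by rewrite mul1r mulrC mulrA.
Qed.

Lemma fac_id (R : realType) (P1 Pp x u v : R) : P1 != 0 -> Pp != 0 -> x - 1 != 0 ->
  v - u = P1 * (x - 1) / Pp *
   (1 + (Pp * v - P1 * x) / (P1 * (x - 1)) - (Pp * u - P1) / (P1 * (x - 1))).
Proof. by move=> h1 h2 h3; field; rewrite h1 h2 h3. Qed.


Theorem lemma6 (R : realType) (x : R) (p1 p2 : nat -> nat) (delta : nat -> R) :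
  1 < x ->
  (forall n : nat, (n <= p1 n)%N /\ (n <= p2 n)%N) ->
  (forall n : nat, 0 < delta n) ->
  delta @ \oo --> (0 : R) ->
  exists o : nat -> R,
    (fun n : nat => o n / n%:R) @ \oo --> (0 : R) /\
    exists N : nat, forall n : nat, (N <= n)%N ->
      forall xs : nat -> R, in_E n (p1 n) (p2 n) x (delta n) xs ->
      let p := (p1 n + p2 n)%N in
      let C := (p1 n)%:R * (x - 1) / p%:R in
      let a2 := 2^-1 - delta n / (x - 1) in
      let a1 := 2^-1 + delta n / (x - 1) in
      let S1 := \sum_(1 <= i < n) xbar (p1 n) (p2 n) x (xs i) in
      let S2 := \sum_(1 <= i < n) (xbar (p1 n) (p2 n) x (xs i)) ^+ 2 in
      let P := \prod_(1 <= i < n) (xs n - xs i) in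
      P <= C ^+ (n - 1) *
             expR ((n%:R + o n) * ((p%:R * xs n - (p1 n)%:R * x)
                                    / ((p1 n)%:R * (x - 1)))
                   - S1 - a2 * S2)
      /\
      C ^+ (n - 1) * expR (- S1 - a1 * S2) <= P.
Proof.
move=> hx hp hd hcv.
have x1 : 0 < x - 1 by lra.
have x10 : x - 1 != 0 by rewrite gt_eqF.
exists (fun n => 2 * n%:R * (delta n / (x - 1))); split; first exact: conv_o.
have r1 : 0 < (x - 1) / 10 by apply: divr_gt0.
move/cvgrPdist_lt: hcv => /(_ _ r1) [N0 _ HN].
exists N0.+1 => n hn xs hE p C a2 a1 S1 S2 P.
have n1 : (1 <= n)%N by apply: leq_trans hn.
set e := delta n / (x - 1).
have e0 : 0 < e by apply: divr_gt0.
have e1 : e <= 10^-1.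
  have := HN n (ltnW hn); rewrite /= sub0r normrN gtr0_norm // => h.
  rewrite /e ler_pdivrMr // mulrC; apply: ltW; move: h; rewrite mulrC. lra.
case: hE => [[hD01 hmono] h1 hn1 hn2 hn3].
have P10 : 0 < ((p1 n)%:R : R).
  by rewrite ltr0n; apply: leq_trans n1 (proj1 (hp n)).
have Pp0 : 0 < (p%:R : R).
  by rewrite ltr0n /p; apply: leq_trans n1 (leq_trans (proj1 (hp n)) (leq_addr _ _)).
have hq : p%:R * ((p1 n)%:R / (p1 n + p2 n)%:R) = (p1 n)%:R :> R.
  by rewrite /p mulrC divfK // gt_eqF.
have D0 : 0 < (p1 n)%:R * (x - 1) by apply: mulr_gt0.
have hDe : e * ((p1 n)%:R * (x - 1)) = delta n * (p1 n)%:R by rewrite /e; field.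
set y := (p%:R * xs n - (p1 n)%:R * x) / ((p1 n)%:R * (x - 1)).
have hy0 : 0 < y.
  apply: divr_gt0 => //.
  have : p%:R * ((p1 n)%:R / (p1 n + p2 n)%:R * x) < p%:R * xs n by rewrite ltr_pM2l.
  rewrite mulrA hq; lra.
have hye : y < e.
  rewrite /y ltr_pdivrMr // hDe.
  have : p%:R * xs n < p%:R * ((p1 n)%:R / (p1 n + p2 n)%:R * (x + delta n)) by rewrite ltr_pM2l.
  rewrite mulrA hq; lra.
have ht : forall i, (1 <= i < n)%N ->
    - e < xbar (p1 n) (p2 n) x (xs i) < e.
  move=> i /andP[i1 i2].
  have hi1 : xs 1%N <= xs i by apply: (@mono_chain R n xs hmono 1 i) => //; exact: ltnW.
  have hi2 : xs i <= xs (n - 1)%N.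
    apply: (@mono_chain R n xs hmono i (n - 1)) => //; last exact: leq_subr.
    by rewrite leq_subRL // addnC addn1.
  rewrite /xbar ltr_pdivlMr // ltr_pdivrMr // hDe mulNr hDe.
  have : p%:R * ((p1 n)%:R / (p1 n + p2 n)%:R * (1 - delta n)) < p%:R * xs i.
    by rewrite ltr_pM2l //; apply: lt_le_trans hi1.
  have : p%:R * xs i < p%:R * ((p1 n)%:R / (p1 n + p2 n)%:R * (1 + delta n)).
    by rewrite ltr_pM2l //; apply: le_lt_trans hn1.
  move=> ha hb; rewrite mulrA hq in ha; rewrite mulrA hq in hb.
  rewrite /p in ha hb; apply/andP; split; lra.
have hfac : forall i, xs n - xs i = C * (1 + y - xbar (p1 n) (p2 n) x (xs i)).
  move=> i; rewrite /C /y /xbar; by apply: fac_id; rewrite ?x10 // gt_eqF.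
pose t i := xbar (p1 n) (p2 n) x (xs i).
have hP : P = C ^+ (n - 1) * \prod_(1 <= i < n) (1 + y - t i).
  rewrite /P (eq_big_nat _ _ (fun i _ => hfac i)) big_split /=.
  by rewrite prodr_const_nat.
have C0 : 0 <= C ^+ (n - 1).
  by apply: exprn_ge0; rewrite /C; apply: divr_ge0 => //; apply: ltW.
have hS1 : S1 = \sum_(1 <= i < n) t i by [].
have hS2 : S2 = \sum_(1 <= i < n) t i ^+ 2 by [].
rewrite hP; split.
- apply: ler_wpM2l => //.
  apply: (@le_trans _ _ (\prod_(1 <= i < n) expR (y * (1 + 2 * e) - t i - (2^-1 - e) * t i ^+ 2))).
    rewrite big_nat_cond [leRHS]big_nat_cond; apply: ler_prod => i /andP[hi _].
    have /andP[ha hb] := ht i hi.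
    apply/andP; split; first by rewrite /t; lra.
    by apply: factU => //; apply: ltW.
  rewrite -expR_sum sum_id -hS1 -hS2 ler_expR /a2 -/e.
  rewrite natrB // lerD2r lerD2r.
  have : 0 <= y * (1 + 2 * e) by apply: mulr_ge0; lra.
  nra.
- apply: ler_wpM2l => //.
  apply: (@le_trans _ _ (\prod_(1 <= i < n) expR (0 - t i - (2^-1 + e) * t i ^+ 2))).
    rewrite -expR_sum sum_id -hS1 -hS2 /a1 -/e mulr0 sub0r.
    by [].
  rewrite big_nat_cond [leRHS]big_nat_cond; apply: ler_prod => i /andP[hi _].
  have /andP[ha hb] := ht i hi.
  apply/andP; split; first by apply: expR_ge0.
  by rewrite sub0r; apply: factL => //; apply: ltW.
Qed.
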